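(* Let $(\mathbf f,\mathbf g)$ be a vector admissible system, $\epsilon\in\mathcal E$, $L,w\in\mathbb N$, and let $\mathbf X$ be the fixed point of the one-sided spatially-coupled system obtained as the limit of its recursion from the all-ones initialization (so that, in particular, its rows are non-decreasing in the position index). Then $\mathbf x^\infty(\mathbf x_{i_0};\epsilon)$ exists, $\mathbf x_{i_0}\preceq\mathbf x^\infty(\mathbf x_{i_0};\epsilon)$, and $U(\mathbf x_{i_0};\epsilon)\ge U(\mathbf x^\infty(\mathbf x_{i_0};\epsilon);\epsilon)$, where $U$ is the single-system potential.
   Context: Let $d\in\mathbb N$, $\mathcal X=[0,1]^d$, $\mathcal E=[0,1]$, $\mathcal X^\circ=\mathcal X\setminus\{\mathbf 0\}$; vectors are row vectors and $\mathbf x\preceq\mathbf y$ means $x_i\le y_i$ for all $i$. Let $\mathbf D$ be a $d\times d$ positive diagonal matrix, $\mathbf f:\mathcal X\times\mathcal E\to\mathcal X$, $\mathbf g:\mathcal X\to\mathcal X$, and $F,G$ scalar functionals with $\nabla_{\mathbf x}F(\mathbf x;\epsilon)=\mathbf f(\mathbf x;\epsilon)\mathbf D$, $\nabla G(\mathbf x)=\mathbf g(\mathbf x)\mathbf D$, $F(\mathbf 0;\epsilon)=G(\mathbf 0)=0$. $(\mathbf f,\mathbf g)$ is a vector admissible system if: (i) $\mathbf f,\mathbf g$ are $C^2$; (ii) $\mathbf f(\mathbf x;\epsilon)$, $\mathbf g(\mathbf x)$ are non-decreasing in $\mathbf x$ w.r.t. $\preceq$; (iii) for $\mathbf x\in\mathcal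 X^\circ$, $\epsilon_1<\epsilon_2$ implies $\mathbf f(\mathbf x;\epsilon_1)\preceq\mathbf f(\mathbf x;\epsilon_2)$ and $\mathbf f(\mathbf x;\epsilon_1)\ne\mathbf f(\mathbf x;\epsilon_2)$; (iv) $\mathbf f(\mathbf 0;\epsilon)=\mathbf f(\mathbf x;0)=\mathbf g(\mathbf 0)=\mathbf 0$, $F(\mathbf x;0)=0$. Single-system potential: $U(\mathbf x;\epsilon)=\mathbf g(\mathbf x)\mathbf D\mathbf x^{\mathsf T}-G(\mathbf x)-F(\mathbf g(\mathbf x);\epsilon)$. $\mathbf x^\infty(\mathbf x;\epsilon)=\lim_{\ell\to\infty}\mathbf x^{(\ell)}$ for the recursion $\mathbf x^{(\ell+1)}=\mathbf f(\mathbf g(\mathbf x^{(\ell)});\epsilon)$, $\mathbf x^{(0)}=\mathbf x$, when the limit exists. One-sided spatially-coupled system: let $\epsilon_i=\epsilon$ for $i\in\{-L,\dots,L\}$, $\epsilon_i=0$ otherwise, $i_0=\lfloor (w-1)/2\rfloor$. Iterates $\mathbf x_i^{(\ell)}$, $i\in\{-L,\dots,L+w-1\}$, start from $\mathbf x_i^{(0)}=\mathbf 1$, with $\mathbf x_i^{(\ell)}=\mathbf 0$ for $i<-L$; for $-L\le i\le i_0$, $\mathbf x_i^{(\ell+1)}=\frac1w\sum_{k=0}^{w-1}\mathbf f\big(\frac1w\sum_{j=0}^{w-1}\mathbf g(\mathbf x^{(\ell)}_{i+j-k});\epsilon_{i-k}\big)$, and for $i_0<i\le L+w-1$, $\mathbf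 x_i^{(\ell)}=\mathbf x_{i_0}^{(\ell)}$. Its fixed point $\mathbf X$ has rows $\mathbf x_{-L},\dots,\mathbf x_{L+w-1}$. *)

(* Defs.v *)
From Stdlib Require Import Reals Lra Lia ZArith List Bool.
Open Scope R_scope.

(* Vectors in R^d are represented as functions nat -> R; a vector of the
   cube [0,1]^n has coordinates in [0,1] for indices < n and is padded
   with zeros for indices >= n. *)
Definition vec := nat -> R.

Definition in_cube (n : nat) (x : vec) : Prop :=
  (forall i, (i < n)%nat -> 0 <= x i <= 1) /\ (forall i, (n <= i)%nat -> x i = 0).

Definition in_E (e : R) : Prop := 0 <= e <= 1.

Definition vzero : vec := fun _ => 0.
Definition vone (d : nat) : vec := fun i => if (i <? d)%nat then 1 else 0.

Definition vle (d : nat) (x y : vec) : Prop := forall i, (i < d)%nat -> x i <= y i.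

Definition vupd (x : vec) (j : nat) (t : R) : vec :=
  fun i => if Nat.eqb i j then t else x i.

Definition vtrunc (n : nat) (z : vec) : vec := fun i => if (i <? n)%nat then z i else 0.

Definition pderiv_in (h : vec -> R) (j : nat) (x : vec) (l : R) : Prop :=
  forall eps, 0 < eps -> exists delta, 0 < delta /\
    forall t, 0 <= t <= 1 -> t <> x j -> Rabs (t - x j) < delta ->
      Rabs ((h (vupd x j t) - h x) / (t - x j) - l) < eps.

Definition cont_in (n : nat) (h : vec -> R) (x : vec) : Prop :=
  forall eps, 0 < eps -> exists delta, 0 < delta /\
    forall y, in_cube n y -> (forall i, (i < n)%nat -> Rabs (y i - x i) < delta) ->
      Rabs (h y - h x) < eps.

Definition C2_on (n : nat) (h : vec -> R) : Prop :=
  exists (dh : nat -> vec -> R) (ddh : nat -> nat -> vec -> R),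
    forall x, in_cube n x ->
      cont_in n h x /\
      forall j, (j < n)%nat ->
        pderiv_in h j x (dh j x) /\ cont_in n (dh j) x /\
        forall k, (k < n)%nat ->
          pderiv_in (dh j) k x (ddh j k x) /\ cont_in n (ddh j k) x.

Definition rsum (n : nat) (h : nat -> R) : R := fold_right Rplus 0 (map h (seq 0 n)).

(* Vector admissible system (f,g) with diagonal D (given by its diagonal Dd)
   and potentials F, G. *)
Definition vector_admissible (d : nat) (Dd : nat -> R)
    (f : vec -> R -> vec) (g : vec -> vec)
    (F : vec -> R -> R) (G : vec -> R) : Prop :=
  (forall i, (i < d)%nat -> 0 < Dd i) /\
  (forall x e, in_cube d x -> in_E e -> in_cube d (f x e)) /\
  (forall x, in_cube d x -> in_cube d (g x)) /\
  (forall x e j, in_cube d x -> in_E e -> (j < d)%nat ->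
     pderiv_in (fun y => F y e) j x (f x e j * Dd j)) /\
  (forall x j, in_cube d x -> (j < d)%nat ->
     pderiv_in G j x (g x j * Dd j)) /\
  (forall e, in_E e -> F vzero e = 0) /\ G vzero = 0 /\
  (* (i) f, g are C^2 (f jointly in (x, e) in [0,1]^(d+1)) *)
  (forall c, (c < d)%nat -> C2_on (S d) (fun z => f (vtrunc d z) (z d) c)) /\
  (forall c, (c < d)%nat -> C2_on d (fun x => g x c)) /\
  (forall e x y, in_E e -> in_cube d x -> in_cube d y -> vle d x y -> vle d (f x e) (f y e)) /\
  (forall x y, in_cube d x -> in_cube d y -> vle d x y -> vle d (g x) (g y)) /\
  (forall x e1 e2, in_cube d x -> x <> vzero -> in_E e1 -> in_E e2 -> e1 < e2 ->
     vle d (f x e1) (f x e2) /\ f x e1 <> f x e2) /\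
  (forall e, in_E e -> f vzero e = vzero) /\
  (forall x, in_cube d x -> f x 0 = vzero) /\
  g vzero = vzero /\
  (forall x, in_cube d x -> F x 0 = 0).

Definition U_pot (d : nat) (Dd : nat -> R) (f : vec -> R -> vec) (g : vec -> vec)
    (F : vec -> R -> R) (G : vec -> R) (x : vec) (e : R) : R :=
  rsum d (fun i => g x i * Dd i * x i) - G x - F (g x) e.

Fixpoint ss_iter (f : vec -> R -> vec) (g : vec -> vec) (e : R) (x : vec) (l : nat) : vec :=
  match l with
  | O => x
  | S l' => f (g (ss_iter f g e x l')) e
  end.

Definition sc_eps (L : nat) (e : R) (i : Z) : R :=
  if (andb (- Z.of_nat L <=? i)%Z (i <=? Z.of_nat L)%Z) then e else 0.

Definition sc_i0 (w : nat) : Z := ((Z.of_nat w - 1) / 2)%Z.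

Definition sc_step (f : vec -> R -> vec) (g : vec -> vec) (e : R) (L w : nat)
    (prev : Z -> vec) : Z -> vec :=
  fun i =>
    if (i <? - Z.of_nat L)%Z then vzero
    else
      let i' := if (sc_i0 w <? i)%Z then sc_i0 w else i in
      fun c => / INR w * rsum w (fun k =>
        f (fun c' => / INR w * rsum w (fun j =>
              g (prev (i' + Z.of_nat j - Z.of_nat k)%Z) c'))
          (sc_eps L e (i' - Z.of_nat k)%Z) c).

Fixpoint sc_iter (d : nat) (f : vec -> R -> vec) (g : vec -> vec) (e : R) (L w : nat)
    (l : nat) : Z -> vec :=
  match l with
  | O => fun i => if (i <? - Z.of_nat L)%Z then vzero else vone d
  | S l' => sc_step f g e L w (sc_iter d f g e L w l')
  end.

(* Main.v *)
Require Import Defs.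
From Stdlib Require Import Reals ZArith.
From Stdlib Require Import Lra Lia List FunctionalExtensionality.
Open Scope R_scope.

Lemma rsum_S n h : rsum (S n) h = rsum n h + h n.
Proof.
  unfold rsum. rewrite seq_S, map_app, fold_right_app. simpl.
  generalize (map h (seq 0 n)). intro l. induction l as [|x l IH]; simpl; [lra|].
  rewrite IH. lra.
Qed.

Lemma rsum_0 h : rsum 0 h = 0.
Proof. reflexivity. Qed.

Lemma rsum_Sl n h : rsum (S n) h = h 0%nat + rsum n (fun k => h (S k)).
Proof.
  induction n as [|n IH].
  - rewrite rsum_S, !rsum_0. lra.
  - rewrite rsum_S, IH, rsum_S. lra.
Qed.

Lemma rsum_le n a b : (forall i, (i < n)%nat -> a i <= b i) -> rsum n a <= rsum n b.
Proof.
  induction n as [|n IH]; intros H.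
  - rewrite !rsum_0; lra.
  - rewrite !rsum_S. assert (a n <= b n) by (apply H; lia).
    assert (rsum n a <= rsum n b) by (apply IH; intros; apply H; lia). lra.
Qed.

Lemma rsum_ext n a b : (forall i, (i < n)%nat -> a i = b i) -> rsum n a = rsum n b.
Proof.
  intros H; apply Rle_antisym; apply rsum_le; intros i Hi; rewrite H; auto; lra.
Qed.

Lemma rsum_plus n a b : rsum n a + rsum n b = rsum n (fun i => a i + b i).
Proof. induction n as [|n IH]. rewrite !rsum_0; lra. rewrite !rsum_S. lra. Qed.

Lemma rsum_minus n a b : rsum n a - rsum n b = rsum n (fun i => a i - b i).
Proof. induction n as [|n IH]. rewrite !rsum_0; lra. rewrite !rsum_S. lra. Qed.

Lemma rsum_const n c : rsum n (fun _ => c) = INR n * c.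
Proof. induction n as [|n IH]. rewrite rsum_0; simpl; lra. rewrite rsum_S, IH, S_INR. lra. Qed.

Lemma rsum_bound n h lo hi : (forall i, (i < n)%nat -> lo <= h i <= hi) ->
  INR n * lo <= rsum n h <= INR n * hi.
Proof.
  intros H; rewrite <- !rsum_const; split; apply rsum_le; intros i Hi; apply H in Hi; lra.
Qed.

Lemma avg_bound w h lo hi : (1 <= w)%nat -> (forall i, (i < w)%nat -> lo <= h i <= hi) ->
  lo <= / INR w * rsum w h <= hi.
Proof.
  intros Hw H. apply rsum_bound in H.
  assert (0 < INR w) by (apply lt_0_INR; lia).
  assert (/ INR w * (INR w * lo) = lo) by (field; lra).
  assert (/ INR w * (INR w * hi) = hi) by (field; lra).
  assert (0 < / INR w) by (apply Rinv_0_lt_compat; lra).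
  split; nra.
Qed.

Lemma Un_cv_rsum n (u : nat -> nat -> R) a :
  (forall i, (i < n)%nat -> Un_cv (fun l => u l i) (a i)) ->
  Un_cv (fun l => rsum n (u l)) (rsum n a).
Proof.
  induction n as [|n IH]; intros H.
  - intros eps He. exists 0%nat. intros. rewrite !rsum_0. unfold Rdist. rewrite Rminus_diag, Rabs_R0. lra.
  - rewrite rsum_S. eapply Un_cv_ext.
    2: { apply CV_plus. apply IH. intros; apply H; lia. apply H; lia. }
    intro l. simpl. rewrite rsum_S. reflexivity.
Qed.

Section One.
Variables (phi D : R -> R) (a b m : R).
Hypotheses (Ha : 0 <= a) (Hab : a <= b) (Hb : b <= 1)
  (HD : forall t, a <= t <= b -> m <= D t)
  (Hder : forall t, a <= t <= b -> forall eps, 0 < eps -> exists delta, 0 < delta /\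
     forall s, 0 <= s <= 1 -> s <> t -> Rabs (s - t) < delta ->
       Rabs ((phi s - phi t) / (s - t) - D t) < eps).

Lemma one_eps eps : 0 < eps -> (m - eps) * (b - a) <= phi b - phi a.
Proof.
  intros He.
  set (chi := fun t => phi t - (m - eps) * t).
  assert (loc : forall t, a <= t <= b -> exists delta, 0 < delta /\
     forall s, a <= s <= b -> s <> t -> Rabs (s - t) < delta ->
       (t < s -> chi t < chi s) /\ (s < t -> chi s < chi t)).
  { intros t Ht. destruct (Hder t Ht (eps/2)) as [delta [Hd Hs]]; [lra|].
    exists delta; split; auto. intros s Hs1 Hst Hsd.
    assert (Hq := Hs s ltac:(lra) Hst Hsd).
    set (q := (phi s - phi t) / (s - t)) in Hq.
    assert (Hst' : s - t <> 0) by lra.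
    assert (Heq : phi s - phi t = q * (s - t)) by (unfold q; field; auto).
    assert (HDt := HD t Ht).
    apply Rabs_def2 in Hq. unfold chi.
    split; intros; nra. }
  set (S := fun t => a <= t <= b /\ forall s, a <= s <= t -> chi a <= chi s).
  assert (HSb : bound S) by (exists b; intros t [Ht _]; lra).
  assert (HSa : exists t, S t) by (exists a; split; [lra| intros s Hs; replace s with a by lra; lra]).
  destruct (completeness S HSb HSa) as [c [Hub Hlub]].
  assert (Hac : a <= c) by (apply Hub; destruct HSa as [t Ht]; split; [lra| intros s Hs; replace s with a by lra; lra]).
  assert (Hcb : c <= b) by (apply Hlub; intros t [Ht _]; lra).
  assert (C1 : forall s, a <= s < c -> chi a <= chi s).
  { intros s Hs. destruct (Rle_dec (chi a) (chi s)) as [|Hn]; auto.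
    exfalso. assert (c <= s); [|lra]. apply Hlub. intros t [Ht Ht2].
    destruct (Rle_dec t s); auto. exfalso; apply Hn; apply Ht2; lra. }
  assert (C2 : chi a <= chi c).
  { destruct (Req_dec c a) as [->|Hne]; [lra|].
    destruct (loc c ltac:(lra)) as [delta [Hd Hl]].
    set (s := Rmax a (c - delta/2)).
    assert (a <= s) by apply Rmax_l.
    assert (s < c) by (unfold s; apply Rmax_lub_lt; lra).
    assert (c - delta/2 <= s) by apply Rmax_r.
    assert (chi s < chi c).
    { apply (Hl s); try lra. rewrite Rabs_left; lra. }
    assert (chi a <= chi s) by (apply C1; lra). lra. }
  assert (C3 : c = b).
  { destruct (Req_dec c b) as [|Hne]; auto. exfalso.
    destruct (loc c ltac:(lra)) as [delta [Hd Hl]].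
    set (s := Rmin b (c + delta/2)).
    assert (s <= b) by apply Rmin_l.
    assert (c < s) by (unfold s; apply Rmin_glb_lt; lra).
    assert (s <= c + delta/2) by apply Rmin_r.
    assert (S s).
    { split; [lra|]. intros r Hr. destruct (Rle_dec r c).
      - destruct (Req_dec r c) as [->|]; auto. apply C1; lra.
      - assert (chi c < chi r); [|lra]. apply (Hl r); try lra. rewrite Rabs_right; lra. }
    assert (s <= c) by (apply Hub; auto). lra. }
  subst c. unfold chi in C2. nra.
Qed.

Lemma one_dim : m * (b - a) <= phi b - phi a.
Proof.
  destruct (Rle_dec (m * (b - a)) (phi b - phi a)) as [|Hn]; auto. exfalso.
  destruct (Req_dec a b) as [->|Hne]. { apply Hn. replace (b - b) with 0 by ring. lra. }
  set (eps := (m * (b - a) - (phi b - phi a)) / (2 * (b - a))).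
  assert (Hpos : 0 < eps) by (unfold eps; apply Rdiv_lt_0_compat; lra).
  assert (H := one_eps eps Hpos).
  assert (eps * (b - a) = (m * (b - a) - (phi b - phi a)) / 2) by (unfold eps; field; lra).
  nra.
Qed.
End One.

Lemma vupd_same z j t : vupd z j t j = t.
Proof. unfold vupd. now rewrite Nat.eqb_refl. Qed.

Lemma vupd_vupd z j t s : vupd (vupd z j t) j s = vupd z j s.
Proof. apply functional_extensionality; intro i. unfold vupd. destruct (Nat.eqb i j); auto. Qed.

Lemma gen_ineq d Dd (h : vec -> R) (p : vec -> vec) x y :
 (forall i, (i < d)%nat -> 0 < Dd i) ->
 (forall z j, in_cube d z -> (j < d)%nat -> pderiv_in h j z (p z j * Dd j)) ->
 (forall x y, in_cube d x -> in_cube d y -> vle d x y -> vle d (p x) (p y)) ->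
 in_cube d x -> in_cube d y -> vle d x y ->
 rsum d (fun i => p x i * Dd i * (y i - x i)) <= h y - h x.
Proof.
  intros HDd Hd Hm Hx Hy Hxy.
  set (zk := fun k : nat => fun i : nat => if (i <? k)%nat then y i else x i).
  assert (Hcube : forall k t, (k < d)%nat -> 0 <= t <= 1 -> in_cube d (vupd (zk k) k t)).
  { intros k t Hk Ht. split.
    - intros i Hi. unfold vupd, zk. destruct (Nat.eqb i k); auto.
      destruct (i <? k)%nat; [apply Hy|apply Hx]; auto.
    - intros i Hi. unfold vupd, zk. destruct (Nat.eqb_spec i k); [lia|].
      destruct (Nat.ltb_spec i k); [lia|]. apply Hx; auto. }
  assert (Hvle : forall k t, (k < d)%nat -> x k <= t -> vle d x (vupd (zk k) k t)).
  { intros k t Hk Ht i Hi. unfold vupd, zk. destruct (Nat.eqb_spec i k); [subst; auto|].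
    destruct (i <? k)%nat; [apply Hxy; auto| lra]. }
  assert (Hstep : forall k, (k < d)%nat ->
     p x k * Dd k * (y k - x k) <= h (zk (S k)) - h (zk k)).
  { intros k Hk.
    assert (E1 : vupd (zk k) k (x k) = zk k).
    { apply functional_extensionality; intro i. unfold vupd, zk.
      destruct (Nat.eqb_spec i k); [subst; now rewrite Nat.ltb_irrefl|auto]. }
    assert (E2 : vupd (zk k) k (y k) = zk (S k)).
    { apply functional_extensionality; intro i. unfold vupd, zk.
      destruct (Nat.eqb_spec i k); [subst; now rewrite (proj2 (Nat.ltb_lt k (S k))) by lia|].
      destruct (Nat.ltb_spec i k); destruct (Nat.ltb_spec i (S k)); auto; lia. }
    rewrite <- E1, <- E2.
    assert (Hxk := proj1 Hx k Hk). assert (Hyk := proj1 Hy k Hk). assert (Hxyk := Hxy k Hk).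
    apply (one_dim (fun t => h (vupd (zk k) k t)) (fun t => p (vupd (zk k) k t) k * Dd k)
             (x k) (y k) (p x k * Dd k)); try lra.
    - intros t Ht. apply Rmult_le_compat_r; [left; apply HDd; auto|].
      apply (Hm x); auto. apply Hcube; auto; lra. apply Hvle; auto; lra.
    - intros t Ht eps He.
      destruct (Hd (vupd (zk k) k t) k ltac:(apply Hcube; auto; lra) Hk eps He) as [delta [Hdl Hs]].
      exists delta; split; auto. intros s Hs1 Hst Hsd.
      assert (Hq := Hs s Hs1). rewrite vupd_same, vupd_vupd in Hq. apply Hq; auto. }
  assert (Hind : forall k, (k <= d)%nat ->
     rsum k (fun i => p x i * Dd i * (y i - x i)) <= h (zk k) - h x).
  { induction k as [|k IH]; intros Hk.
    - rewrite rsum_0. assert (zk 0%nat = x) as ->; [|lra].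
      apply functional_extensionality; intro i; reflexivity.
    - rewrite rsum_S. assert (H1 := IH ltac:(lia)). assert (H2 := Hstep k ltac:(lia)). lra. }
  assert (Hzd : zk d = y).
  { apply functional_extensionality; intro i. unfold zk. destruct (Nat.ltb_spec i d); auto.
    rewrite (proj2 Hx i), (proj2 Hy i); auto. }
  replace (h y) with (h (zk d)) by (now rewrite Hzd). apply Hind. lia.
Qed.

Ltac destr_adm H :=
  destruct H as [HD [Hfc [Hgc [HdF [HdG [HF0 [HG0 [HCf [HCg [Hfm [Hgm [Hstr [Hf0 [Hfe0 [Hg0 HFe0]]]]]]]]]]]]]]].

Lemma key d Dd f g F G e x y :
  vector_admissible d Dd f g F G -> in_E e ->
  in_cube d x -> in_cube d y -> vle d x y ->
  rsum d (fun i => (g y i - g x i) * Dd i * (f (g x) e i - y i)) <=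
  U_pot d Dd f g F G x e - U_pot d Dd f g F G y e.
Proof.
  intros Hadm He Hx Hy Hxy. destr_adm Hadm.
  assert (KG := gen_ineq d Dd G g x y HD HdG Hgm Hx Hy Hxy).
  assert (KF := gen_ineq d Dd (fun z => F z e) (fun z => f z e) (g x) (g y) HD
     (fun z j Hz Hj => HdF z e j Hz He Hj) (fun a b Ha Hb Hab => Hfm e a b He Ha Hb Hab)
     (Hgc x Hx) (Hgc y Hy) (Hgm x y Hx Hy Hxy)).
  simpl in KF. unfold U_pot.
  assert (E : rsum d (fun i => (g y i - g x i) * Dd i * (f (g x) e i - y i)) =
     rsum d (fun i => g x i * Dd i * x i) - rsum d (fun i => g y i * Dd i * y i)
     + rsum d (fun i => g x i * Dd i * (y i - x i))
     + rsum d (fun i => f (g x) e i * Dd i * (g y i - g x i))).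
  { rewrite !rsum_minus, !rsum_plus. apply rsum_ext; intros; ring. }
  lra.
Qed.

Lemma rsum_opp n h : - rsum n h = rsum n (fun i => - h i).
Proof. induction n as [|n IH]. rewrite !rsum_0; lra. rewrite !rsum_S. lra. Qed.

Lemma cv_shift u a : Un_cv u a -> Un_cv (fun l => u (S l)) a.
Proof. intros H eps He. destruct (H eps He) as [N HN]. exists N. intros n Hn. apply HN; lia. Qed.

Lemma cv_bound u a lo hi : Un_cv u a -> (forall n, lo <= u n <= hi) -> lo <= a <= hi.
Proof.
  intros H Hb. split.
  - destruct (Rle_dec lo a) as [|Hn]; auto. exfalso.
    destruct (H (lo - a) ltac:(lra)) as [N HN]. specialize (HN N (le_n N)). specialize (Hb N).
    unfold Rdist in HN. apply Rabs_def2 in HN. lra.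
  - destruct (Rle_dec a hi) as [|Hn]; auto. exfalso.
    destruct (H (a - hi) ltac:(lra)) as [N HN]. specialize (HN N (le_n N)). specialize (Hb N).
    unfold Rdist in HN. apply Rabs_def2 in HN. lra.
Qed.

Lemma ss_cube d Dd f g F G e x l :
  vector_admissible d Dd f g F G -> in_E e -> in_cube d x -> in_cube d (ss_iter f g e x l).
Proof.
  intros Hadm He Hx. destr_adm Hadm. induction l; simpl; auto.
Qed.

Lemma ss_part d Dd f g F G e x0 :
  vector_admissible d Dd f g F G -> in_E e -> in_cube d x0 -> vle d x0 (f (g x0) e) ->
  exists xinf : vec,
    (forall c, Un_cv (fun l => ss_iter f g e x0 l c) (xinf c)) /\
    vle d x0 xinf /\
    U_pot d Dd f g F G x0 e >= U_pot d Dd f g F G xinf e.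
Proof.
  intros Hadm He Hx0 H01.
  assert (Hadm' := Hadm). destr_adm Hadm'.
  set (xs := ss_iter f g e x0).
  assert (Hcube : forall l, in_cube d (xs l)) by (intro; apply ss_cube with Dd F G; auto).
  assert (Hmono : forall l, vle d (xs l) (xs (S l))).
  { induction l as [|l IH]; [exact H01|].
    apply (Hfm e (g (xs l)) (g (xs (S l))) He (Hgc _ (Hcube l)) (Hgc _ (Hcube (S l)))).
    apply Hgm; auto. }
  assert (Hgr : forall c, Un_growing (fun l => xs l c)).
  { intros c l. destruct (Nat.lt_ge_cases c d) as [Hc|Hc].
    - apply Hmono; auto.
    - rewrite (proj2 (Hcube l)), (proj2 (Hcube (S l))); auto; lra. }
  assert (Hbd01 : forall c l, 0 <= xs l c <= 1).
  { intros c l. destruct (Nat.lt_ge_cases c d) as [Hc|Hc].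
    - apply (proj1 (Hcube l)); auto.
    - rewrite (proj2 (Hcube l)); auto; lra. }
  assert (Hub : forall c, has_ub (fun l => xs l c)).
  { intros c. exists 1. intros r [i ->]. apply Hbd01. }
  set (xinf := fun c => proj1_sig (growing_cv _ (Hgr c) (Hub c))).
  assert (Hcv : forall c, Un_cv (fun l => xs l c) (xinf c)).
  { intro c. unfold xinf. destruct (growing_cv _ (Hgr c) (Hub c)); auto. }
  exists xinf. split; [exact Hcv|].
  assert (Hle : forall l c, xs l c <= xinf c).
  { intros l c. apply (growing_ineq (fun l => xs l c)); auto. }
  split. { intros c Hc. apply (Hle 0%nat c). }
  assert (Hic : in_cube d xinf).
  { split.
    - intros c Hc. apply (cv_bound _ _ 0 1 (Hcv c)). intro; apply Hbd01.
    - intros c Hc. apply (UL_sequence (fun l => xs l c)); auto.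
      intros eps Heps. exists 0%nat. intros n Hn. rewrite (proj2 (Hcube n)); auto.
      unfold Rdist. rewrite Rminus_diag, Rabs_R0. lra. }
  set (U := U_pot d Dd f g F G).
  assert (HU1 : forall l, U (xs (S l)) e <= U (xs l) e).
  { intro l. assert (K := key d Dd f g F G e (xs l) (xs (S l)) Hadm He (Hcube l) (Hcube (S l)) (Hmono l)).
    assert (rsum d (fun i => (g (xs (S l)) i - g (xs l) i) * Dd i * (f (g (xs l)) e i - xs (S l) i)) = 0).
    { rewrite <- (Rmult_0_r (INR d)), <- rsum_const. apply rsum_ext. intros i Hi.
      simpl. unfold xs. simpl. ring. }
    fold U in K. lra. }
  assert (HU2 : forall l, U (xs l) e <= U x0 e).
  { induction l as [|l IH]; [apply Rle_refl|]. specialize (HU1 l). lra. }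
  set (Sq := fun l => rsum d (fun i => Dd i * (xinf i - xs (S l) i))).
  assert (HS : Un_cv Sq 0).
  { replace 0 with (rsum d (fun i => Dd i * (xinf i - xinf i))).
    2: { rewrite <- (Rmult_0_r (INR d)), <- rsum_const. apply rsum_ext. intros; ring. }
    apply (Un_cv_rsum d (fun l i => Dd i * (xinf i - xs (S l) i))). intros i Hi.
    apply CV_mult. { intros eps Heps. exists 0%nat. intros. unfold Rdist. rewrite Rminus_diag, Rabs_R0. lra. }
    apply CV_minus. { intros eps Heps. exists 0%nat. intros. unfold Rdist. rewrite Rminus_diag, Rabs_R0. lra. }
    apply (cv_shift (fun l => xs l i)). apply Hcv. }
  assert (HU3 : forall l, - Sq l <= U (xs l) e - U xinf e).
  { intro l. assert (K := key d Dd f g F G e (xs l) xinf Hadm He (Hcube l) Hic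
       (fun c Hc => Hle l c)). fold U in K.
    eapply Rle_trans; [|exact K]. unfold Sq. rewrite rsum_opp.
    apply rsum_le. intros i Hi.
    assert (Ha : 0 <= g xinf i - g (xs l) i <= 1).
    { assert (H1 := Hgm (xs l) xinf (Hcube l) Hic (fun c Hc => Hle l c) i Hi).
      assert (H2 := proj1 (Hgc xinf Hic) i Hi). assert (H3 := proj1 (Hgc (xs l) (Hcube l)) i Hi). lra. }
    assert (Hb : xs (S l) i - xinf i <= 0) by (specialize (Hle (S l) i); lra).
    assert (HDi := HD i Hi).
    replace (f (g (xs l)) e i) with (xs (S l) i) by reflexivity.
    set (A := g xinf i - g (xs l) i) in *. set (B := xs (S l) i - xinf i) in *.
    replace (xinf i - xs (S l) i) with (- B) by (unfold B; ring).
    assert (Dd i * B <= 0) by nra.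
    assert (0 <= (Dd i * B) * (A - 1)) by nra. nra. }
  destruct (Rle_dec (U xinf e) (U x0 e)) as [|Hn]; [lra|]. exfalso.
  destruct (HS (U xinf e - U x0 e) ltac:(lra)) as [N HN]. specialize (HN N (le_n N)).
  unfold Rdist in HN. apply Rabs_def2 in HN. specialize (HU3 N). specialize (HU2 N). lra.
Qed.

Lemma unif_N n (s : nat -> vec) x delta : 0 < delta ->
  (forall c, (c < n)%nat -> Un_cv (fun l => s l c) (x c)) ->
  exists N, forall l, (l >= N)%nat -> forall c, (c < n)%nat -> Rabs (s l c - x c) < delta.
Proof.
  intros Hd Hcv. induction n as [|n IH].
  - exists 0%nat. intros; lia.
  - destruct IH as [N1 HN1]. { intros; apply Hcv; lia. }
    destruct (Hcv n ltac:(lia) delta Hd) as [N2 HN2].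
    exists (Nat.max N1 N2). intros l Hl c Hc.
    destruct (Nat.eq_dec c n) as [->|].
    + apply HN2. lia.
    + apply HN1; lia.
Qed.

Lemma cv_cont n h (s : nat -> vec) x : in_cube n x -> (forall l, in_cube n (s l)) ->
  (forall c, (c < n)%nat -> Un_cv (fun l => s l c) (x c)) -> cont_in n h x ->
  Un_cv (fun l => h (s l)) (h x).
Proof.
  intros Hx Hs Hcv Hc eps He. destruct (Hc eps He) as [delta [Hd Hdl]].
  destruct (unif_N n s x delta Hd Hcv) as [N HN]. exists N. intros l Hl.
  unfold Rdist. apply Hdl; auto.
Qed.

Definition ext (d : nat) (e : R) (y : vec) : vec :=
  fun i => if (i <? d)%nat then y i else if Nat.eqb i d then e else 0.

Lemma fg_cont d Dd f g F G e (s : nat -> vec) x c :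
  vector_admissible d Dd f g F G -> in_E e -> (c < d)%nat ->
  in_cube d x -> (forall l, in_cube d (s l)) ->
  (forall c, (c < d)%nat -> Un_cv (fun l => s l c) (x c)) ->
  Un_cv (fun l => f (g (s l)) e c) (f (g x) e c).
Proof.
  intros Hadm He Hc Hx Hs Hcv. destr_adm Hadm.
  assert (Hg : forall c', (c' < d)%nat -> Un_cv (fun l => g (s l) c') (g x c')).
  { intros c' Hc'. destruct (HCg c' Hc') as [dh [ddh Hh]].
    apply (cv_cont d (fun y => g y c') s x); auto. apply (Hh x Hx). }
  assert (Hext : forall y, in_cube d y -> in_cube (S d) (ext d e y)).
  { intros y Hy. split.
    - intros i Hi. unfold ext. destruct (Nat.ltb_spec i d). apply Hy; auto.
      destruct (Nat.eqb_spec i d). exact He. lia.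
    - intros i Hi. unfold ext. destruct (Nat.ltb_spec i d); [lia|].
      destruct (Nat.eqb_spec i d); [lia|auto]. }
  assert (Hval : forall y, in_cube d y -> f (vtrunc d (ext d e y)) (ext d e y d) c = f y e c).
  { intros y Hy. assert (vtrunc d (ext d e y) = y) as ->.
    { apply functional_extensionality; intro i. unfold vtrunc, ext.
      destruct (Nat.ltb_spec i d); auto. symmetry; apply Hy; auto. }
    unfold ext. rewrite Nat.ltb_irrefl, Nat.eqb_refl. reflexivity. }
  destruct (HCf c Hc) as [dh [ddh Hh]].
  assert (Hgx := Hgc x Hx).
  assert (K := cv_cont (S d) (fun z => f (vtrunc d z) (z d) c) (fun l => ext d e (g (s l)))
     (ext d e (g x)) (Hext _ Hgx) (fun l => Hext _ (Hgc _ (Hs l)))).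
  simpl in K. rewrite Hval in K by auto.
  eapply Un_cv_ext; [|apply K].
  - intro l. simpl. apply Hval. apply Hgc, Hs.
  - intros c' Hc'. unfold ext. destruct (Nat.ltb_spec c' d). apply Hg; auto.
    destruct (Nat.eqb_spec c' d); [|lia].
    intros eps Heps. exists 0%nat. intros. unfold Rdist. rewrite Rminus_diag, Rabs_R0. lra.
  - apply (Hh _ (Hext _ Hgx)).
Qed.

Definition Aavg (w : nat) (g : vec -> vec) (prev : Z -> vec) (t : Z) : vec :=
  fun c' => / INR w * rsum w (fun j => g (prev (t + Z.of_nat j)%Z) c').

Definition Hterm f g e L w prev t : vec := f (Aavg w g prev t) (sc_eps L e t).

Lemma step_form f g e L w prev i c : (- Z.of_nat L <= i)%Z ->
  sc_step f g e L w prev i c =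
  / INR w * rsum w (fun k => Hterm f g e L w prev (Z.min i (sc_i0 w) - Z.of_nat k)%Z c).
Proof.
  intros Hi. unfold sc_step. destruct (Z.ltb_spec i (- Z.of_nat L)); [lia|]. cbv zeta.
  assert (Hm : (if (sc_i0 w <? i)%Z then sc_i0 w else i) = Z.min i (sc_i0 w)).
  { destruct (Z.ltb_spec (sc_i0 w) i); lia. }
  rewrite Hm. f_equal. apply rsum_ext. intros k Hk. unfold Hterm, Aavg. f_equal.
  apply functional_extensionality; intro c'. f_equal. apply rsum_ext. intros j Hj.
  assert (E: (Z.min i (sc_i0 w) + Z.of_nat j - Z.of_nat k = Z.min i (sc_i0 w) - Z.of_nat k + Z.of_nat j)%Z) by lia.
  now rewrite E.
Qed.

Lemma rsum_w w w' h : w = S w' -> rsum w h = rsum w' h + h w'.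
Proof. intros ->; apply rsum_S. Qed.
Lemma rsum_wl w w' h : w = S w' -> rsum w h = h 0%nat + rsum w' (fun k => h (S k)).
Proof. intros ->; apply rsum_Sl. Qed.

Lemma vle_trans d x y z : vle d x y -> vle d y z -> vle d x z.
Proof. intros H1 H2 i Hi. specialize (H1 i Hi). specialize (H2 i Hi). lra. Qed.

Lemma vle_refl d x : vle d x x.
Proof. intros i Hi; lra. Qed.

Lemma vzero_le d x : in_cube d x -> vle d vzero x.
Proof. intros Hx i Hi. apply Hx; auto. Qed.

Lemma mono_of_adj d (p : Z -> vec) : (forall m, vle d (p m) (p (m + 1)%Z)) ->
  forall m m', (m <= m')%Z -> vle d (p m) (p m').
Proof.
  intros H m m' Hmm.
  assert (forall n : nat, vle d (p m) (p (m + Z.of_nat n)%Z)).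
  { induction n as [|n IH].
    - replace (m + Z.of_nat 0)%Z with m by lia. apply vle_refl.
    - eapply vle_trans; [exact IH|]. replace (m + Z.of_nat (S n))%Z with (m + Z.of_nat n + 1)%Z by lia. apply H. }
  replace m' with (m + Z.of_nat (Z.to_nat (m' - m)))%Z by lia. auto.
Qed.

Lemma i0_facts w : (1 <= w)%nat -> (0 <= sc_i0 w)%Z /\ (2 * sc_i0 w <= Z.of_nat w - 1)%Z.
Proof.
  intros Hw. unfold sc_i0. split.
  - apply Z.div_pos; lia.
  - apply Z.mul_div_le; lia.
Qed.

Lemma eps_cases L e t : sc_eps L e t = e \/ sc_eps L e t = 0.
Proof. unfold sc_eps. destruct (andb _ _); auto. Qed.

Lemma eps_inE L e t : in_E e -> in_E (sc_eps L e t).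
Proof. intros He. destruct (eps_cases L e t) as [-> | ->]; auto. unfold in_E; lra. Qed.

Section SC.
Variables (d : nat) (Dd : nat -> R) (f : vec -> R -> vec) (g : vec -> vec)
  (F : vec -> R -> R) (G : vec -> R) (e : R) (L w : nat).
Hypotheses (Hadm : vector_admissible d Dd f g F G) (He : in_E e) (Hw : (1 <= w)%nat).

Lemma Aavg_cube prev t : (forall z, in_cube d (prev z)) -> in_cube d (Aavg w g prev t).
Proof.
  assert (Hadm' := Hadm). destr_adm Hadm'. intros Hp. split.
  - intros c Hc. unfold Aavg. apply avg_bound; auto. intros j Hj.
    apply (Hgc _ (Hp _)); auto.
  - intros c Hc. unfold Aavg. assert (H := avg_bound w (fun j => g (prev (t + Z.of_nat j)%Z) c) 0 0 Hw).
    assert (0 <= / INR w * rsum w (fun j => g (prev (t + Z.of_nat j)%Z) c) <= 0); [|lra].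
    apply H. intros j Hj. rewrite (proj2 (Hgc _ (Hp _))); auto; lra.
Qed.

Lemma Hterm_cube prev t : (forall z, in_cube d (prev z)) -> in_cube d (Hterm f g e L w prev t).
Proof.
  assert (Hadm' := Hadm). destr_adm Hadm'. intros Hp. apply Hfc. apply Aavg_cube; auto. apply eps_inE; auto.
Qed.

Lemma Aavg_le prev t v : (forall z, in_cube d (prev z)) ->
  (forall j, (j < w)%nat -> vle d (g (prev (t + Z.of_nat j)%Z)) v) -> vle d (Aavg w g prev t) v.
Proof.
  intros Hp H c Hc. unfold Aavg. assert (Hb : forall j, (j < w)%nat -> 0 <= g (prev (t + Z.of_nat j)%Z) c <= v c).
  { intros j Hj. split; [|apply H; auto]. assert (Hadm' := Hadm). destr_adm Hadm'. apply (Hgc _ (Hp _)); auto. }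
  apply (avg_bound w _ 0 (v c) Hw) in Hb. lra.
Qed.

Lemma Aavg_mono prev t t' : (forall z, in_cube d (prev z)) ->
  (forall m m', (m <= m')%Z -> vle d (prev m) (prev m')) -> (t <= t')%Z ->
  vle d (Aavg w g prev t) (Aavg w g prev t').
Proof.
  assert (Hadm' := Hadm). destr_adm Hadm'. intros Hp Hm Ht c Hc. unfold Aavg.
  apply Rmult_le_compat_l. { left; apply Rinv_0_lt_compat, lt_0_INR; lia. }
  apply rsum_le. intros j Hj. apply Hgm; auto. apply Hm. lia.
Qed.

Lemma Hterm_le prev t t' : (forall z, in_cube d (prev z)) ->
  (forall m m', (m <= m')%Z -> vle d (prev m) (prev m')) -> (t <= t')%Z ->
  (sc_eps L e t' = e \/ sc_eps L e t = 0) ->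
  vle d (Hterm f g e L w prev t) (Hterm f g e L w prev t').
Proof.
  assert (Hadm' := Hadm). destr_adm Hadm'. intros Hp Hm Ht Heps.
  assert (Hz : sc_eps L e t = 0 -> vle d (Hterm f g e L w prev t) (Hterm f g e L w prev t')).
  { intros H0. unfold Hterm at 1. rewrite H0, Hfe0 by (apply Aavg_cube; auto).
    apply vzero_le, Hterm_cube; auto. }
  destruct Heps as [H1|H0]; auto.
  destruct (eps_cases L e t) as [H2|H2]; auto.
  unfold Hterm. rewrite H1, H2. apply Hfm; auto; try (apply Aavg_cube; auto).
  apply Aavg_mono; auto.
Qed.

Definition P l := sc_iter d f g e L w l.

Lemma P_cube l z : in_cube d (P l z).
Proof.
  revert z. induction l as [|l IH]; intro z; unfold P; simpl.
  - destruct (Z.ltb_spec z (- Z.of_nat L)).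
    + split; intros; unfold vzero; lra.
    + split; intros i Hi; unfold vone.
      * rewrite (proj2 (Nat.ltb_lt i d)) by auto; lra.
      * destruct (Nat.ltb_spec i d); [lia|auto].
  - fold (P l). destruct (Z.ltb_spec z (- Z.of_nat L)).
    + unfold sc_step. rewrite (proj2 (Z.ltb_lt _ _)) by auto. split; intros; unfold vzero; lra.
    + split.
      * intros c Hc. rewrite step_form by lia. apply avg_bound; auto. intros k Hk.
        apply (Hterm_cube (P l) _ IH); auto.
      * intros c Hc. rewrite step_form by lia.
        assert (0 <= / INR w * rsum w (fun k => Hterm f g e L w (P l) (Z.min z (sc_i0 w) - Z.of_nat k)%Z c) <= 0); [|lra].
        apply avg_bound; auto. intros k Hk. rewrite (proj2 (Hterm_cube (P l) _ IH)); auto; lra.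
Qed.

Lemma P_copy l i c : (sc_i0 w <= i)%Z -> P l i c = P l (sc_i0 w) c.
Proof.
  intros Hi. destruct (i0_facts w Hw) as [H0 H1]. destruct l as [|l]; unfold P; simpl.
  - destruct (Z.ltb_spec i (- Z.of_nat L)); [lia|]. destruct (Z.ltb_spec (sc_i0 w) (- Z.of_nat L)); [lia|]. auto.
  - rewrite !step_form by lia. rewrite Z.min_r by lia. rewrite Z.min_id. reflexivity.
Qed.

Lemma P_mono l : forall m m', (m <= m')%Z -> vle d (P l m) (P l m').
Proof.
  assert (Hadm' := Hadm). destr_adm Hadm'.
  destruct (i0_facts w Hw) as [Hi0 Hi1].
  induction l as [|l IH]; apply mono_of_adj; intro m.
  - unfold P; simpl. destruct (Z.ltb_spec m (- Z.of_nat L)).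
    + apply vzero_le. assert (Hq := P_cube 0 (m+1)). unfold P in Hq; simpl in Hq. exact Hq.
    + destruct (Z.ltb_spec (m+1) (- Z.of_nat L)); [lia|]. apply vle_refl.
  - intros c Hc. unfold P; simpl. fold (P l).
    destruct (Z.ltb_spec m (- Z.of_nat L)).
    + unfold sc_step at 1. rewrite (proj2 (Z.ltb_lt _ _)) by auto.
      apply (P_cube (S l) (m+1)); auto.
    + rewrite !step_form by lia.
      destruct (Z.le_gt_cases (sc_i0 w) m).
      * rewrite !Z.min_r by lia. lra.
      * rewrite Z.min_l by lia. rewrite Z.min_l by lia.
        apply Rmult_le_compat_l. { left; apply Rinv_0_lt_compat, lt_0_INR; lia. }
        assert (Ew : w = S (w - 1)) by lia. set (w' := (w - 1)%nat) in Ew.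
        rewrite (rsum_w w w' _ Ew), (rsum_wl w w' _ Ew).
        assert (E : rsum w' (fun k => Hterm f g e L w (P l) (m + 1 - Z.of_nat (S k))%Z c) =
                    rsum w' (fun k => Hterm f g e L w (P l) (m - Z.of_nat k)%Z c)).
        { apply rsum_ext; intros k Hk. replace (m + 1 - Z.of_nat (S k))%Z with (m - Z.of_nat k)%Z by lia. reflexivity. }
        rewrite E.
        assert (Hk : Hterm f g e L w (P l) (m - Z.of_nat w')%Z c <=
                     Hterm f g e L w (P l) (m + 1 - Z.of_nat 0)%Z c); [|lra].
        apply Hterm_le; auto.
        -- intro; apply P_cube.
        -- lia.
        -- unfold sc_eps. destruct (Z.le_gt_cases (m + 1) (Z.of_nat L)).
           ++ left. replace (m + 1 - Z.of_nat 0)%Z with (m+1)%Z by lia.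
              rewrite (proj2 (Z.leb_le _ _)) by lia. rewrite (proj2 (Z.leb_le _ _)) by lia. reflexivity.
           ++ right. rewrite (proj2 (Z.leb_gt _ _)) by lia. reflexivity.
Qed.

Lemma P_S3 l : vle d (P (S l) (sc_i0 w)) (f (g (P l (sc_i0 w))) e).
Proof.
  assert (Hadm' := Hadm). destr_adm Hadm'.
  destruct (i0_facts w Hw) as [Hi0 Hi1].
  intros c Hc. unfold P at 1; simpl. fold (P l). rewrite step_form by lia.
  rewrite Z.min_id. refine (proj2 (avg_bound w _ 0 _ Hw _)). intros k Hk. split.
  { apply (Hterm_cube (P l) _ (P_cube l)); auto. }
  assert (HA : vle d (Aavg w g (P l) (sc_i0 w - Z.of_nat k)%Z) (g (P l (sc_i0 w)))).
  { apply Aavg_le. apply P_cube. intros j Hj. apply Hgm; try apply P_cube.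
    destruct (Z.le_gt_cases (sc_i0 w - Z.of_nat k + Z.of_nat j) (sc_i0 w)).
    - apply P_mono; auto.
    - intros c' Hc'. rewrite P_copy by lia. lra. }
  unfold Hterm. destruct (eps_cases L e (sc_i0 w - Z.of_nat k)%Z) as [-> | ->].
  - apply Hfm; auto; try (apply Aavg_cube, P_cube); apply Hgc, P_cube.
  - rewrite Hfe0 by (apply Aavg_cube, P_cube). unfold vzero.
    apply (Hfc _ e (Hgc _ (P_cube l _)) He); auto.
Qed.
End SC.

Theorem lemma10 (d : nat) (Dd : nat -> R) (f : vec -> R -> vec) (g : vec -> vec)
    (F : vec -> R -> R) (G : vec -> R) (e : R) (L w : nat) (X : Z -> vec) :
  vector_admissible d Dd f g F G ->
  in_E e ->
  (1 <= w)%nat ->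
  (forall i c, (- Z.of_nat L <= i <= Z.of_nat L + Z.of_nat w - 1)%Z ->
     Un_cv (fun l => sc_iter d f g e L w l i c) (X i c)) ->
  exists xinf : vec,
    (forall c, Un_cv (fun l => ss_iter f g e (X (sc_i0 w)) l c) (xinf c)) /\
    vle d (X (sc_i0 w)) xinf /\
    U_pot d Dd f g F G (X (sc_i0 w)) e >= U_pot d Dd f g F G xinf e.
Proof.
  intros Hadm He Hw Hcv.
  destruct (i0_facts w Hw) as [Hi0 Hi1].
  assert (Hc0 : forall c, Un_cv (fun l => P d f g e L w l (sc_i0 w) c) (X (sc_i0 w) c)).
  { intro c. apply Hcv. lia. }
  assert (Hx0 : in_cube d (X (sc_i0 w))).
  { split.
    - intros c Hc. apply (cv_bound _ _ 0 1 (Hc0 c)). intro l.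
      apply (P_cube d Dd f g F G e L w Hadm He Hw l (sc_i0 w)); auto.
    - intros c Hc. apply (UL_sequence _ _ _ (Hc0 c)).
      intros eps Heps. exists 0%nat. intros n Hn.
      rewrite (proj2 (P_cube d Dd f g F G e L w Hadm He Hw n (sc_i0 w))); auto.
      unfold Rdist. rewrite Rminus_diag, Rabs_R0. lra. }
  apply ss_part; auto.
  intros c Hc.
  apply (Rle_cv_lim (Un := fun l => P d f g e L w (S l) (sc_i0 w) c)
                    (Vn := fun l => f (g (P d f g e L w l (sc_i0 w))) e c)).
  - intro l. apply (P_S3 d Dd f g F G e L w Hadm He Hw l c Hc).
  - apply (cv_shift (fun l => P d f g e L w l (sc_i0 w) c)). apply Hc0.
  - apply (fg_cont d Dd f g F G e (fun l => P d f g e L w l (sc_i0 w))); auto.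
    intro l. apply (P_cube d Dd f g F G e L w Hadm He Hw).
Qed.
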